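(* Let $H$ be a payoff-maximization game, and let $\Phi$ be an exact potential function for $H$. Suppose there are $A,B\ge1$ with $A\,\Phi(\vec s)\ge u(\vec s)\ge\frac1B\Phi(\vec s)$ for all outcomes $\vec s$. Suppose also that $H$ is $(\lambda,\mu)$-nice with $\lambda>0$ and $\mu\ge0$, and let $\rho=\frac{\lambda}{1+\mu}$. Then for every $\epsilon>0$, from any initial outcome, the BR dynamic reaches an outcome $\vec s^t$ with $u(\vec s^t)\ge\frac{\rho(1-\epsilon)}{AB}u(\vec s^* )$ within $$O\!\left(\frac{n}{A(1+\mu)}\log\frac1\epsilon\right)$$ steps. Moreover, every outcome reached afterwards by best-response moves also satisfies this approximation guarantee.
   Context: A payoff-maximization game has players $N=\{1,\dots,n\}$, strategy sets $S_i$ and payoffs $u_i:\prod_j S_j\to\mathbb R_{\ge0}$. The social welfare is $u(\vec s)=\sum_iu_i(\vec s)$, and $\vec s^*$ maximizes $u$. $\Phi$ is an exact potential if $\Phi(s_i',\vec s_{-i})-\Phi(\vec s)=u_i(s_i',\vec s_{-i})-u_i(\vec s)$ for all $i$, $s_i'$ and $\vec s$. The game is $(\lambda,\mu)$-nice if for every outcome $\vec s$ there exists an outcome $\vec s'$ with $$\sum_{i\in N}u_i(s_i',\vec s_{-i})\ge\lambda u(\vec s^* )-\mu u(\vec s).$$ For an outcome $\vec s$, let $s_i^b$ be a best response of $i$ to $\vec s_{-i}$. Set $\Delta_i(\vec s)=u_i(s_i^b,\vec s_{-i})-u_i(\vec s)$. The BR dynamic is the process in which, at each step, a player $i$ maximizing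 $\Delta_i(\vec s)$ switches to a best response; each such move is one step. *)

(* Defs.v *)
From mathcomp Require Import all_boot.
From Stdlib Require Import Reals Relations.
Set Implicit Arguments.
Unset Strict Implicit.
Unset Printing Implicit Defensive.

Definition profile (n : nat) (S : 'I_n -> Type) := forall i : 'I_n, S i.

(* (x, s_{-i}) : player i switches to x, the others keep s. *)
Definition upd (n : nat) (S : 'I_n -> Type) (s : profile S) (i : 'I_n) (x : S i)
  : profile S :=
  fun j => match i =P j with
           | ReflectT e => eq_rect i S x j e
           | ReflectF _ => s j
           end.
Arguments upd {n S} s i x _.

Definition payoffs (n : nat) (S : 'I_n -> Type) := forall i : 'I_n, profile S -> R.

Definition welfare (n : nat) (S : 'I_n -> Type) (u : payoffs S) (s : profile S) : R :=
  \big[Rplus/0%R]_(i < n) u i s.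

Definition welfare_max (n : nat) (S : 'I_n -> Type) (u : payoffs S) (sopt : profile S) :=
  forall s : profile S, (welfare u s <= welfare u sopt)%R.

Definition exact_potential (n : nat) (S : 'I_n -> Type) (u : payoffs S)
  (Phi : profile S -> R) :=
  forall (i : 'I_n) (x : S i) (s : profile S),
    (Phi (upd s i x) - Phi s = u i (upd s i x) - u i s)%R.

Definition nice (n : nat) (S : 'I_n -> Type) (u : payoffs S) (sopt : profile S)
  (lambda mu : R) :=
  forall s : profile S, exists s' : profile S,
    (\big[Rplus/0%R]_(i < n) u i (upd s i (s' i))
       >= lambda * welfare u sopt - mu * welfare u s)%R.

Definition best_response (n : nat) (S : 'I_n -> Type) (u : payoffs S)
  (s : profile S) (i : 'I_n) (b : S i) :=
  forall x : S i, (u i (upd s i x) <= u i (upd s i b))%R.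
Arguments best_response {n S} u s i b.

Definition br_move (n : nat) (S : 'I_n -> Type) (u : payoffs S)
  (s s' : profile S) :=
  exists (i : 'I_n) (b : S i), best_response u s i b /\ s' = upd s i b.

(* One step of the BR dynamic: a player i maximizing
   Delta_i(s) = u_i(s_i^b, s_{-i}) - u_i(s) switches to a best response. *)
Definition br_dyn_step (n : nat) (S : 'I_n -> Type) (u : payoffs S)
  (s s' : profile S) :=
  exists (i : 'I_n) (b : S i),
    best_response u s i b /\
    (forall (j : 'I_n) (bj : S j), best_response u s j bj ->
       (u j (upd s j bj) - u j s <= u i (upd s i b) - u i s)%R) /\
    s' = upd s i b.

Definition br_dynamic (n : nat) (S : 'I_n -> Type) (u : payoffs S)
  (traj : nat -> profile S) :=
  forall t : nat, br_dyn_step u (traj t) (traj t.+1).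

Definition br_reachable (n : nat) (S : 'I_n -> Type) (u : payoffs S) :=
  clos_refl_trans (profile S) (@br_move n S u).

(* Main.v *)
Require Import Defs.
From mathcomp Require Import all_boot.
From Stdlib Require Import Reals Relations Lra ZArith FunctionalExtensionality.
From HB Require Import structures.

Lemma Rplus_0_l' : left_id 0%R Rplus. Proof. move=> x; apply: Rplus_0_l. Qed.
Lemma Rplus_A' : associative Rplus. Proof. move=> x y z; by rewrite Rplus_assoc. Qed.
HB.instance Definition _ := Monoid.isComLaw.Build R 0%R Rplus Rplus_A' Rplus_comm Rplus_0_l'.

Lemma upd_same (n : nat) (S : 'I_n -> Type) (s : profile S) (i : 'I_n) :
  upd s i (s i) = s.
Proof.
apply: functional_extensionality_dep => j.
rewrite /upd; case: (i =P j) => [e|ne] //.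
by case: j / e.
Qed.

Lemma br_Phi_mono (n : nat) (S : 'I_n -> Type) (u : payoffs S) (Phi : profile S -> R)
  s i b : exact_potential u Phi -> best_response u s i b -> (Phi s <= Phi (upd s i b))%R.
Proof.
move=> Hpot Hb.
have := Hpot i b s. have := Hb (s i). rewrite upd_same. lra.
Qed.

Lemma reach_mono (n : nat) (S : 'I_n -> Type) (u : payoffs S) (Phi : profile S -> R)
  s s' : exact_potential u Phi -> br_reachable u s s' -> (Phi s <= Phi s')%R.
Proof.
move=> Hpot H; induction H.
- destruct H as (i & b & Hb & ->); exact: br_Phi_mono.
- lra.
- lra.
Qed.

Lemma sum_le (n : nat) (f g : 'I_n -> R) (d : R) :
  (forall j, f j <= g j + d)%R ->
  (\big[Rplus/0%R]_(j < n) f j <= \big[Rplus/0%R]_(j < n) g j + INR n * d)%R.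
Proof.
elim: n f g => [|n IH] f g H.
  rewrite !big_ord0 /=; lra.
rewrite S_INR !big_ord_recr.
have := IH (fun j => f (widen_ord (leqnSn n) j)) (fun j => g (widen_ord (leqnSn n) j))
  (fun j => H _).
have := H ord_max.
set X := (\big[Rplus/0%R]_(j < n) f (widen_ord _ j)).
set Y := (\big[Rplus/0%R]_(j < n) g (widen_ord _ j)).
rewrite /=. lra.
Qed.

Lemma sum_ge0 (n : nat) (f : 'I_n -> R) :
  (forall j, 0 <= f j)%R -> (0 <= \big[Rplus/0%R]_(j < n) f j)%R.
Proof.
elim: n f => [|n IH] f H.
  rewrite !big_ord0 /=; lra.
rewrite !big_ord_recr.
have := IH (fun j => f (widen_ord (leqnSn n) j)) (fun j => H _).
have := H ord_max.
set X := (\big[Rplus/0%R]_(j < n) f (widen_ord _ j)).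
rewrite /=. lra.
Qed.

Lemma step_ineq (n : nat) (S : 'I_n -> Type) (u : payoffs S) (Phi : profile S -> R)
  (sopt : profile S) lambda mu s s' :
  (forall (s : profile S) (i : 'I_n), exists b : S i, best_response u s i b) ->
  exact_potential u Phi -> nice u sopt lambda mu ->
  br_dyn_step u s s' ->
  (INR n * (Phi s' - Phi s) >= lambda * welfare u sopt - (1 + mu) * welfare u s)%R.
Proof.
move=> Hex Hpot Hnice [i [b [Hb [Hmax ->]]]].
destruct (Hnice s) as [s2 Hs2].
have key : forall j, (u j (upd s j (s2 j)) <= u j s + (u i (upd s i b) - u i s))%R.
  move=> j; destruct (Hex s j) as [bj Hbj].
  have := Hmax j bj Hbj. have := Hbj (s2 j). lra.
have := @sum_le n (fun j => u j (upd s j (s2 j))) (fun j => u j s) _ key.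
rewrite (Hpot i b s). rewrite /welfare in Hs2 *. lra.
Qed.

Lemma exp_le (x y : R) : (x <= y)%R -> (exp x <= exp y)%R.
Proof.
move=> H; destruct (Rle_lt_or_eq_dec _ _ H) as [h|h].
- left; exact: exp_increasing.
- rewrite h; lra.
Qed.

Theorem theorem3 :
  exists C : R, (0 < C)%R /\
  forall (n : nat) (S : 'I_n -> Type) (u : payoffs S) (Phi : profile S -> R)
         (sopt : profile S) (A B lambda mu : R),
    (forall (i : 'I_n) (s : profile S), (0 <= u i s)%R) ->
    (forall (s : profile S) (i : 'I_n), exists b : S i, best_response u s i b) ->
    welfare_max u sopt ->
    exact_potential u Phi ->
    (1 <= A)%R -> (1 <= B)%R ->
    (forall s : profile S,
        (A * Phi s >= welfare u s)%R /\ (welfare u s >= / B * Phi s)%R) ->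
    nice u sopt lambda mu -> (0 < lambda)%R -> (0 <= mu)%R ->
    forall eps : R, (0 < eps)%R ->
    forall traj : nat -> profile S, br_dynamic u traj ->
    exists t : nat,
      (t = 0%nat \/
       (INR t < C * (INR n / (A * (1 + mu))) * ln (/ eps) + 1)%R) /\
      forall s : profile S, br_reachable u (traj t) s ->
        (welfare u s >= (lambda / (1 + mu)) * (1 - eps) / (A * B) * welfare u sopt)%R.
Proof.
exists 2%R; split; first lra.
move=> n S u Phi sopt A B lambda mu Hu Hex Hopt Hpot HA HB HAB Hnice Hl Hm eps Heps traj Hdyn.
destruct n as [|n'].
  exists 0%nat; split; first by left.
  move=> s _; rewrite /welfare !big_ord0. rewrite Rmult_0_r; lra.
have Wge0 : forall s, (0 <= welfare u s)%R.
  move=> s; apply: sum_ge0 => j; exact: Hu.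
have Phige0 : forall s, (0 <= Phi s)%R.
  move=> s; have [h1 _] := HAB s; have := Wge0 s => h2.
  destruct (Rle_dec 0 (Phi s)) as [h|h]; first done.
  exfalso; have : (A * Phi s < 0)%R.
    rewrite -(Rmult_0_r A); apply: Rmult_lt_compat_l; lra.
  lra.
set OPT := welfare u sopt.
have OPTge0 : (0 <= OPT)%R by apply: Wge0.
set N := INR n'.+1.
have HN : (0 < N)%R by rewrite /N; apply: lt_0_INR; apply/ltP.
set c := ((1 + mu) * A / N)%R.
have Hc : (0 < c)%R.
  rewrite /c /Rdiv; apply: Rmult_lt_0_compat; last by apply: Rinv_0_lt_compat.
  apply: Rmult_lt_0_compat; lra.
set Pstar := (lambda * OPT / ((1 + mu) * A))%R.
have HPs : (0 <= Pstar)%R.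
  rewrite /Pstar /Rdiv; apply: Rmult_le_pos.
    apply: Rmult_le_pos; lra.
  left; apply: Rinv_0_lt_compat; apply: Rmult_lt_0_compat; lra.
have C1 : forall t, (Phi (traj t) <= Phi (traj t.+1))%R.
  move=> t; have [i [b [Hb [_ ->]]]] := Hdyn t; exact: br_Phi_mono.
have C2 : forall t, (N * (Phi (traj t.+1) - Phi (traj t)) >=
                     lambda * OPT - (1 + mu) * A * Phi (traj t))%R.
  move=> t; have := @step_ineq _ _ _ _ _ _ _ _ _ Hex Hpot Hnice (Hdyn t).
  have [h1 _] := HAB (traj t).
  have : ((1 + mu) * welfare u (traj t) <= (1 + mu) * (A * Phi (traj t)))%R.
    apply: Rmult_le_compat_l; lra.
  rewrite /N /OPT. lra.
have E : ((1 + mu) * A * Pstar = lambda * OPT)%R.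
  rewrite /Pstar; field; split; lra.
have C3 : forall t, (Pstar - Phi (traj t.+1) <= (1 - c) * (Pstar - Phi (traj t)))%R.
  move=> t.
  have E2 : (N * ((1 - c) * (Pstar - Phi (traj t))) =
             N * (Pstar - Phi (traj t)) - (1 + mu) * A * (Pstar - Phi (traj t)))%R.
    rewrite /c; field; lra.
  apply: (Rmult_le_reg_l N); first done.
  rewrite E2. have := C2 t. lra.
have C4 : forall t, (Pstar - Phi (traj t) <= exp (- (c * INR t)) * Pstar)%R.
  elim=> [|t IH].
    rewrite /= Rmult_0_r Ropp_0 exp_0. have := Phige0 (traj 0). lra.
  have Hexp : (exp (- (c * INR t.+1)) = exp (- c) * exp (- (c * INR t)))%R.
    rewrite -exp_plus S_INR; f_equal; ring.
  rewrite Hexp.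
  destruct (Rle_dec (Pstar - Phi (traj t)) 0) as [h|h].
    have := C1 t. have : (0 <= exp (- c) * exp (- (c * INR t)) * Pstar)%R.
      apply: Rmult_le_pos; last done.
      apply: Rmult_le_pos; left; apply: exp_pos.
    lra.
  have h1 := exp_ineq1_le (- c).
  have : ((1 - c) * (Pstar - Phi (traj t)) <= exp (- c) * (Pstar - Phi (traj t)))%R.
    apply: Rmult_le_compat_r; lra.
  have : (exp (- c) * (Pstar - Phi (traj t)) <=
          exp (- c) * (exp (- (c * INR t)) * Pstar))%R.
    apply: Rmult_le_compat_l; [left; apply: exp_pos | done].
  have := C3 t. lra.
have fin : forall t, (ln (/ eps) <= c * INR t)%R ->
    forall s : profile S, br_reachable u (traj t) s ->
        (welfare u s >= (lambda / (1 + mu)) * (1 - eps) / (A * B) * OPT)%R.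
  move=> t Ht s Hs.
  have He : (exp (- (c * INR t)) <= eps)%R.
    rewrite -[X in (_ <= X)%R](exp_ln eps) //; apply: exp_le.
    rewrite ln_Rinv // in Ht; lra.
  have : (exp (- (c * INR t)) * Pstar <= eps * Pstar)%R.
    apply: Rmult_le_compat_r; done.
  have := C4 t.
  have := @reach_mono _ _ _ _ _ _ Hpot Hs.
  have [_ h2] := HAB s.
  have Eq : ((lambda / (1 + mu)) * (1 - eps) / (A * B) * OPT = / B * ((1 - eps) * Pstar))%R.
    rewrite /Pstar; field; repeat split; lra.
  rewrite Eq => h3 h4 h5.
  have : (/ B * ((1 - eps) * Pstar) <= / B * Phi s)%R.
    apply: Rmult_le_compat_l; last lra.
    left; apply: Rinv_0_lt_compat; lra.
  lra.
have HK : (0 < N / (A * (1 + mu)))%R.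
  rewrite /Rdiv; apply: Rmult_lt_0_compat; first done.
  apply: Rinv_0_lt_compat; apply: Rmult_lt_0_compat; lra.
have Ecx : (c * (N / (A * (1 + mu)) * ln (/ eps)) = ln (/ eps))%R.
  rewrite /c; field; repeat split; lra.
set x := (N / (A * (1 + mu)) * ln (/ eps))%R.
destruct (Rle_dec x 0) as [hx|hx].
  exists 0%nat; split; first by left.
  apply: fin. rewrite /= Rmult_0_r.
  destruct (Rle_dec (ln (/ eps)) 0) as [h|h]; first done.
  exfalso; have : (0 < x)%R by rewrite /x; apply: Rmult_lt_0_compat; lra.
  lra.
have [a1 a2] := archimed x.
have hz : (0 <= up x)%Z.
  apply: le_IZR; lra.
exists (Z.to_nat (up x)).
have Ht : INR (Z.to_nat (up x)) = IZR (up x).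
  by rewrite INR_IZR_INZ Z2Nat.id.
split.
  right. rewrite Ht. have ex : x = (N / (A * (1 + mu)) * ln (/ eps))%R by []. have hx2 := Rnot_le_lt _ _ hx. lra.
apply: fin. rewrite Ht.
rewrite -Ecx -/x. apply: Rmult_le_compat_l; lra.
Qed.
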